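(* Consider the scalar $N$-player linear-quadratic differential game and the matrix $\mathbf M$ described in the context. Let $\mu=(\mu_1,\dots,\mu_N)$ be a weight vector with $\mu_i>0$ and $\sum_i\mu_i=1$, and set $\mu^s_{\max}=\max_i\mu_i/s_i$. Then every feedback Nash equilibrium $(k_1,\dots,k_N)$ satisfies $$\sum_{i=1}^N\mu_ik_i\le\mu^s_{\max}\big(\varrho(\mathbf M)+a\big).$$ Hence the feedback price of anarchy satisfies $$\rho^{FB}_\mu\le\frac{\mu^s_{\max}\big(\varrho(\mathbf M)+a\big)}{\hat k_\mu},$$ where $\varrho(\mathbf M)$ denotes the spectral radius of $\mathbf M$. In particular, for the weights $\bar\mu_i=s_i/\sum_{j=1}^Ns_j$, $$\rho^{FB}_{\bar\mu}\le\frac{\varrho(\mathbf M)+a}{\big(\sum_{i=1}^Ns_i\big)\,\hat k_{\bar\mu}}.$$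
   Context: **Game.** The game is the infinite-horizon scalar linear-quadratic differential game with players $i\in\{1,\dots,N\}$. - State dynamics: $\dot x(t)=ax(t)+\sum_{i=1}^N b_iu_i(t)$, with $x(0)=x_0\neq0$. - Cost of player $i$: $L_i(u)=\int_0^\infty\big(q_ix(t)^2+r_iu_i(t)^2\big)\,dt$. - Parameters: $a\in\mathbb R$; $q_i>0$, $r_i>0$, $b_i\neq0$ are real scalars. - Notation: $s_i=b_i^2/r_i$ and $\sigma_i=s_iq_i$. **Feedback Nash equilibrium (standard characterization).** A feedback Nash equilibrium is an $N$-tuple of stationary linear policies $u_i=-\frac{b_i}{r_i}k_ix$ such that $(k_1,\dots,k_N)$ solves $$2\big(a-\sum_j s_jk_j\big)k_i+q_i+s_ik_i^2=0\quad\text{for all } i,$$ with $a-\sum_js_jk_j<0$. Player $i$'s cost is $k_ix_0^2$. **Social optimum.** For weights $\mu$, define $$\bar q_\mu=\sum_i\mu_iq_i,\qquad \bar b_\mu=\sum_i\frac{b_i^2}{\mu_ir_i},\qquad \hat k_\mu=\frac{a+\sqrt{a^2+\bar q_\mu\bar b_\mu}}{\bar b_\mu}.$$ The minimum over all controls of $\sum_i\mu_iL_i$ equals $\hat k_\mu x_0^2$. **Feedback price of anarchy.** It is defined as $$\rho^{FB}_\mu=\max\Big\{\sum_i\mu_ik_i/\hat k_\mu\Big\},$$ where the maximum (or supremum) is taken over all feedback Nash equilibria. **Matrix $\mathbf M$.** The matrix $\widetilde{\mathbf M}$ is a $2^N\times2^N$ real matrix whose rows and columns are indexed by subsets $\Omega\subseteq\{1,\dots,N\}$.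 Write $n_\Omega=|\Omega|$. - Row $\Omega=\emptyset$: entry $1$ in each column $\{j\}$ for $j=1,\dots,N$; entry $-a$ in column $\emptyset$; all other entries $0$. - Row $\Omega\neq\emptyset$: entry $\sigma_i/(2n_\Omega-1)$ in column $\Omega\setminus\{i\}$ for each $i\in\Omega$; entry $-1/(2n_\Omega-1)$ in column $\Omega\cup\{i\}$ for each $i\notin\Omega$; entry $a/(2n_\Omega-1)$ in column $\Omega$; all other entries $0$. Let $\mathbf D$ be the diagonal matrix with $\Omega$-th diagonal entry $\prod_{j\in\Omega}s_j$ (the empty product is $1$). Then $\mathbf M=\mathbf D^{-1}\widetilde{\mathbf M}\mathbf D$. *)

(* Defs.v *)
(* Scalars live in an arbitrary numClosedFieldType C
   (e.g. the complex numbers); the game parameters are required to be real. *)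
From HB Require Import structures.
From mathcomp Require Import all_boot all_order all_algebra.
Set Implicit Arguments. Unset Strict Implicit. Unset Printing Implicit Defensive.
Import Order.TTheory GRing.Theory Num.Theory.
Local Open Scope ring_scope.

Section Game.
Variables (C : numClosedFieldType) (N : nat).
Variables (a : C) (b q r : 'I_N -> C).

Definition s_ (i : 'I_N) : C := b i ^+ 2 / r i.
Definition sigma_ (i : 'I_N) : C := s_ i * q i.

Definition FNE (k : 'I_N -> C) : Prop :=
  (forall i, k i \is Num.real) /\
  (forall i, 2 * (a - \sum_j s_ j * k j) * k i + q i + s_ i * k i ^+ 2 = 0) /\
  a - \sum_j s_ j * k j < 0.

(* social optimum value for weights mu *)
Definition qbar (mu : 'I_N -> C) : C := \sum_i mu i * q i.
Definition bbar (mu : 'I_N -> C) : C := \sum_i b i ^+ 2 / (mu i * r i).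
Definition khat (mu : 'I_N -> C) : C :=
  (a + sqrtC (a ^+ 2 + qbar mu * bbar mu)) / bbar mu.

(* mu^s_max = max_i mu_i / s_i (all these are positive, so 0 is a neutral seed) *)
Definition mu_s_max (mu : 'I_N -> C) : C := \big[Num.max/0]_i (mu i / s_ i).

(* Matrices indexed by subsets of the player set, via enumeration of {set 'I_N} *)
Definition nsub := #|{: {set 'I_N}}|.
Definition subs (x : 'I_nsub) : {set 'I_N} := enum_val x.

Definition Mtilde_entry (Om Th : {set 'I_N}) : C :=
  if Om == set0 then
    \sum_(j : 'I_N) (Th == [set j])%:R + (Th == set0)%:R * (- a)
  else
    let c := (2 * #|Om|%:R - 1)^-1 in
    \sum_(i in Om) (Th == Om :\ i)%:R * (sigma_ i * c)
    + \sum_(i | i \notin Om) (Th == i |: Om)%:R * (- c)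
    + (Th == Om)%:R * (a * c).

Definition Mtilde : 'M[C]_nsub := \matrix_(x, y) Mtilde_entry (subs x) (subs y).
Definition Dmat : 'M[C]_nsub := \matrix_(x, y) ((x == y)%:R * \prod_(j in subs x) s_ j).
Definition Mmat : 'M[C]_nsub := invmx Dmat *m Mtilde *m Dmat.

End Game.

Definition is_spectral_radius (C : numClosedFieldType) (n : nat) (A : 'M[C]_n) (rho : C) : Prop :=
  (exists2 l, eigenvalue A l & `|l| = rho) /\ (forall l, eigenvalue A l -> `|l| <= rho).

(* Main.v *)
Require Import Defs.
From HB Require Import structures.
From mathcomp Require Import all_boot all_order all_algebra.
From mathcomp Require Import ring.
Import Order.TTheory GRing.Theory Num.Theory.
Local Open Scope ring_scope.

Set Implicit Arguments. Unset Strict Implicit.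


Lemma sum_delta (R : pzSemiRingType) (T : finType) (x : T) (G : T -> R) :
  \sum_(y : T) (y == x)%:R * G y = G x.
Proof. by rewrite (bigD1 x) //= eqxx mul1r big1 ?addr0 // => z /negbTE ->; rewrite mul0r. Qed.

Lemma sum_delta2 (R : comPzSemiRingType) (T : finType) (x : T) (K : R) (G : T -> R) :
  \sum_(y : T) ((y == x)%:R * K) * G y = K * G x.
Proof. by rewrite (bigD1 x) //= eqxx mul1r big1 ?addr0 // => z /negbTE ->; rewrite !mul0r. Qed.

Section Key.
Variables (C : numClosedFieldType) (N : nat) (a : C) (b q r : 'I_N -> C).
Variables (y : 'I_N -> C) (lam : C).
Hypothesis hsig : forall i, sigma_ b q r i = 2 * lam * y i - y i ^+ 2.
Hypothesis hS : \sum_i y i = lam + a.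

Definition W (Th : {set 'I_N}) := \prod_(j in Th) y j.

Lemma key (Om : {set 'I_N}) :
  \sum_(Th : {set 'I_N}) Mtilde_entry a b q r Om Th * W Th = lam * W Om.
Proof.
rewrite /Mtilde_entry; have [-> | hne] := eqVneq Om set0.
  under eq_bigr do rewrite mulrDl.
  rewrite big_split /=.
  under eq_bigr do rewrite mulr_suml.
  rewrite exchange_big /=.
  under eq_bigr do rewrite sum_delta.
  under [X in _ + X]eq_bigr do rewrite -mulrA.
  rewrite sum_delta /W big_set0 mulr1.
  under eq_bigr do rewrite big_set1.
  rewrite hS; ring.
set c := (2 * #|Om|%:R - 1)^-1.
under eq_bigr do rewrite !mulrDl.
rewrite !big_split /=.
under eq_bigr do rewrite mulr_suml.
rewrite exchange_big /=.
under eq_bigr do rewrite sum_delta2.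
under [X in _ + X + _]eq_bigr do rewrite mulr_suml.
rewrite [X in _ + X + _]exchange_big /=.
under [X in _ + X + _]eq_bigr do rewrite sum_delta2.
rewrite sum_delta2.
have h1 : forall i, i \in Om -> sigma_ b q r i * c * W (Om :\ i) = c * ((2 * lam - y i) * W Om).
  move=> i hi; rewrite /W (big_setD1 i hi) /= hsig; ring.
have h2 : forall i, i \notin Om -> - c * W (i |: Om) = - c * (y i * W Om).
  by move=> i hi; rewrite /W (big_setU1 i hi).
rewrite (eq_bigr _ h1) (eq_bigr _ h2) -!mulr_sumr -!mulr_suml.
rewrite sumrB sumr_const.
have hP : \sum_(i | i \notin Om) y i = lam + a - \sum_(i in Om) y i.
  by rewrite -hS [in RHS](bigID (fun i => i \in Om)) /= addrC addrK.
rewrite hP.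
have hc : c * (2 * #|Om|%:R - 1) = 1.
  apply: mulVf; rewrite subr_eq0 -natrM pnatr_eq1.
  by apply/negP => /eqP h; move: (congr1 odd h); rewrite oddM.
transitivity (c * (2 * #|Om|%:R - 1) * (lam * W Om)); last by rewrite hc mul1r.
rewrite -mulr_natr; ring.
Qed.
End Key.

Unset Implicit Arguments.


Section Eig.
Variables (C : numClosedFieldType) (N : nat) (a : C) (b q r : 'I_N -> C).
Variable k : 'I_N -> C.
Hypothesis hs : forall i, s_ b r i != 0.
Hypothesis heq : forall i, 2 * (a - \sum_j s_ b r j * k j) * k i + q i + s_ b r i * k i ^+ 2 = 0.

Lemma sum_subs (G : {set 'I_N} -> C) :
  \sum_(z < nsub N) G (subs z) = \sum_(Th : {set 'I_N}) G Th.
Proof.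
rewrite (reindex (@subs N)) //; exists enum_rank => [z _ | Th _]; rewrite /subs.
  exact: enum_valK.
exact: enum_rankK.
Qed.

Lemma eig_FNE : eigenvalue (Mmat a b q r) (\sum_j s_ b r j * k j - a).
Proof.
pose lam := \sum_j s_ b r j * k j - a.
pose y := fun i => s_ b r i * k i.
have hsig : forall i, sigma_ b q r i = 2 * lam * y i - y i ^+ 2.
  move=> i; transitivity (s_ b r i * (2 * (a - \sum_j s_ b r j * k j) * k i + q i + s_ b r i * k i ^+ 2) + (2 * lam * y i - y i ^+ 2)).
    rewrite /y /lam /sigma_; ring.
  by rewrite heq mulr0 add0r.
have hS : \sum_i y i = lam + a by rewrite /lam subrK.
pose u : 'cV[C]_(nsub N) := \col_x \prod_(j in subs x) k j.
pose w : 'cV[C]_(nsub N) := \col_x W y (subs x).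
have hDu : Dmat b r *m u = w.
  apply/matrixP => x i; rewrite !mxE.
  under eq_bigr do rewrite !mxE.
  rewrite (bigD1 x) //= [X in _ + X]big1 ?addr0; first by rewrite eqxx mul1r /W -big_split.
  by move=> z hz; rewrite eq_sym (negbTE hz) !mul0r.
have hMw : Mtilde a b q r *m w = lam *: w.
  apply/matrixP => x i; rewrite !mxE.
  under eq_bigr do rewrite !mxE.
  rewrite -(key hsig hS) -(sum_subs (fun Th => Mtilde_entry a b q r (subs x) Th * W y Th)).
  done.
have hD : Dmat b r \in unitmx.
  have -> : Dmat b r = diag_mx (\row_x \prod_(j in subs x) s_ b r j).
    apply/matrixP => x z; rewrite !mxE; case: eqP => [->|_]; by rewrite ?mul1r ?mul0r.
  rewrite unitmxE det_diag unitfE; apply/prodf_neq0 => x _; rewrite mxE; exact/prodf_neq0.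
have hMu : Mmat a b q r *m u = lam *: u.
  by rewrite /Mmat -!mulmxA hDu hMw -scalemxAr -hDu mulKmx.
have hu : u != 0.
  apply/negP => /eqP /matrixP /(_ (enum_rank set0) 0).
  rewrite !mxE /subs enum_rankK big_set0 => /eqP; by rewrite oner_eq0.
rewrite /eigenvalue /eigenspace kermx_eq0 row_free_unit.
apply/negP => hU; move/negP: hu; apply.
rewrite -(mulKmx hU u) mulmxBl mul_scalar_mx hMu subrr mulmx0 //.
Qed.
End Eig.

Set Implicit Arguments.


Lemma max_ge (C : numDomainType) (x y : C) : x \is Num.real -> y \is Num.real ->
  x <= Num.max x y /\ y <= Num.max x y.
Proof. by move=> hx hy; case: (real_leP hx hy) => h; split => //; exact: ltW. Qed.

Lemma le_bigmax_real (C : numDomainType) (I : eqType) (F : I -> C) (s : seq I) x :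
  (forall i, F i \is Num.real) -> x \in s -> F x <= \big[Num.max/0]_(j <- s) F j.
Proof.
move=> hF; elim: s => [//|h t IH]; rewrite big_cons in_cons.
have hB : \big[Num.max/0]_(j <- t) F j \is Num.real.
  by apply: bigmax_real => //; rewrite real0.
have [h1 h2] := max_ge (hF h) hB.
case/orP => [/eqP -> // | ht]; exact: le_trans (IH ht) h2.
Qed.

Lemma khat_ge0 (C : numClosedFieldType) (N : nat) (a : C) (b q r mu : 'I_N -> C) :
  a \is Num.real -> (forall i, b i \is Num.real) -> (forall i, 0 < q i) ->
  (forall i, 0 < r i) -> (forall i, 0 < mu i) -> 0 <= khat a b q r mu.
Proof.
move=> ha hb hq hr hmu.
have hqb : 0 <= qbar q mu by apply: sumr_ge0 => i _; apply: mulr_ge0; exact: ltW.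
have hbb : 0 <= bbar b r mu.
  apply: sumr_ge0 => i _; apply: divr_ge0; first by rewrite -realEsqr.
  by apply: mulr_ge0; exact: ltW.
have ha2 : 0 <= a ^+ 2 by rewrite -realEsqr.
rewrite /khat; apply: divr_ge0 => //.
have h1 : `|a| <= sqrtC (a ^+ 2 + qbar q mu * bbar b r mu).
  rewrite -(real_normK ha) -{1}(sqrCK (normr_ge0 a)) ler_sqrtC ?nnegrE.
  - by rewrite real_normK // lerDl mulr_ge0.
  - by rewrite exprn_ge0.
  by rewrite real_normK // addr_ge0 // mulr_ge0.
have h2 : 0 <= a + `|a|.
  have hna : - a \is Num.real by rewrite rpredN.
  have := real_ler_norm hna; rewrite normrN => h.
  by rewrite -subr_ge0 opprK addrC in h.
by apply: le_trans h2 _; rewrite lerD2l.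
Qed.

Unset Implicit Arguments. Set Strict Implicit.

Theorem theorem5 (C : numClosedFieldType) (N : nat) (a : C) (b q r : 'I_N -> C)
  (hN : (0 < N)%N) (ha : a \is Num.real)
  (hb : forall i, b i \is Num.real /\ b i != 0)
  (hq : forall i, q i \is Num.real /\ 0 < q i)
  (hr : forall i, r i \is Num.real /\ 0 < r i)
  (rho : C) (hrho : is_spectral_radius (Mmat a b q r) rho) :
  (forall mu : 'I_N -> C,
     (forall i, mu i \is Num.real /\ 0 < mu i) -> \sum_i mu i = 1 ->
     forall k : 'I_N -> C, FNE a b q r k ->
       \sum_i mu i * k i <= mu_s_max b r mu * (rho + a) /\
       (\sum_i mu i * k i) / khat a b q r mu <= mu_s_max b r mu * (rho + a) / khat a b q r mu)
  /\
  (let mubar := fun i => s_ b r i / \sum_j s_ b r j in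
   forall k : 'I_N -> C, FNE a b q r k ->
     (\sum_i mubar i * k i) / khat a b q r mubar
       <= (rho + a) / ((\sum_j s_ b r j) * khat a b q r mubar)).
Proof.
have hs : forall i, 0 < s_ b r i.
  move=> i; apply: divr_gt0; last by case: (hr i).
  case: (hb i) => hbr hb0; rewrite lt_def -realEsqr hbr andbT.
  by rewrite expf_eq0 negb_and hb0 orbT.
have hs0 : forall i, s_ b r i != 0 by move=> i; rewrite gt_eqF.
have hFNE : forall k, FNE a b q r k ->
    (forall i, 0 <= k i) /\ \sum_j s_ b r j * k j <= rho + a.
  move=> k [hk [heq hneg]]; split.
    move=> i; case: (real_ge0P (hk i)) => // hki; exfalso.
    have h2 : 2 * (a - \sum_j s_ b r j * k j) < 0 by rewrite pmulr_rlt0.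
    have : 0 < 2 * (a - \sum_j s_ b r j * k j) * k i + q i + s_ b r i * k i ^+ 2.
      apply: addr_gt0; first apply: addr_gt0.
      - by rewrite nmulr_rgt0.
      - by case: (hq i).
      by apply: mulr_gt0 => //; rewrite expr2 nmulr_rgt0.
    by rewrite heq ltxx.
  have eig := @eig_FNE _ _ _ _ _ _ _ hs0 heq.
  have hl := hrho.2 _ eig.
  have hpos : 0 < \sum_j s_ b r j * k j - a by rewrite subr_gt0 -subr_lt0.
  by rewrite gtr0_norm // lerBlDr in hl.
split.
  move=> mu hmu hmu1 k hk.
  have [hk0 hS] := hFNE k hk.
  have hM : forall i, mu i / s_ b r i <= mu_s_max b r mu.
    move=> i; rewrite /mu_s_max; apply: (le_bigmax_real (F := fun i => mu i / s_ b r i)); last exact: mem_index_enum.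
    move=> j; apply: gtr0_real; apply: divr_gt0; [by case: (hmu j) | exact: hs].
  have hM0 : 0 <= mu_s_max b r mu.
    apply: le_trans (hM (Ordinal hN)); apply: divr_ge0; last exact: ltW.
    by case: (hmu (Ordinal hN)) => _ /ltW.
  have h1 : \sum_i mu i * k i <= mu_s_max b r mu * (rho + a).
    apply: le_trans (ler_wpM2l hM0 hS).
    rewrite mulr_sumr; apply: ler_sum => i _.
    have -> : mu i * k i = mu i / s_ b r i * (s_ b r i * k i) by rewrite mulrA divfK.
    by apply: ler_wpM2r; [apply: mulr_ge0; [exact: ltW|] | exact: hM].
  split => //; apply: ler_wpM2r => //; rewrite invr_ge0; apply: khat_ge0 => //.
  - by move=> i; case: (hb i).
  - by move=> i; case: (hq i).
  - by move=> i; case: (hr i).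
  by move=> i; case: (hmu i).
move=> mubar k hk.
have [hk0 hS] := hFNE k hk.
have hT : 0 < \sum_j s_ b r j.
  rewrite (bigD1 (Ordinal hN)) //=; apply: (lt_le_trans (hs (Ordinal hN))).
  by rewrite lerDl; apply: sumr_ge0 => i _; exact: ltW.
have hkh : 0 <= khat a b q r mubar.
  apply: khat_ge0 => //.
  - by move=> i; case: (hb i).
  - by move=> i; case: (hq i).
  - by move=> i; case: (hr i).
  by move=> i; rewrite /mubar divr_gt0.
have -> : \sum_i mubar i * k i = (\sum_j s_ b r j * k j) / \sum_j s_ b r j.
  by rewrite mulr_suml; apply: eq_bigr => i _; rewrite /mubar mulrAC.
rewrite [X in _ <= _ * X]invfM mulrA; apply: ler_wpM2r; first by rewrite invr_ge0.
by apply: ler_wpM2r => //; rewrite invr_ge0 ltW.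
Qed.
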